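(* Let $M,N\ge1$, let $T_1,\dots,T_N\in\mathcal{L}(\ell^\infty_M,\mathbb{R})$, let $\mathscr{T}=\{T_n:1\le n\le N\}$, and let $A:\ell^\infty_M\to\ell^\infty_N$ be given by $Ax=(T_nx)_{n=1}^N$. Then $\mathcal{R}(\mathscr{T})=C_2(A)$ and $\mathcal{R}^\gamma(\mathscr{T})=C_2^\gamma(A)$.
   Context: $(r_n)$ is a Rademacher sequence and $(\gamma_n)$ a sequence of independent standard Gaussians. For a family $\mathscr{T}\subseteq\mathcal{L}(X,Y)$, the $R$-bound $\mathcal{R}(\mathscr{T})$ is the least $C$ such that $(\mathbb{E}\|\sum_{n=1}^k r_nS_nx_n\|^2)^{1/2}\le C(\mathbb{E}\|\sum_{n=1}^k r_nx_n\|^2)^{1/2}$ for all $k$, all $S_1,\dots,S_k\in\mathscr{T}$ (not necessarily distinct) and all $x_1,\dots,x_k\in X$; the $\gamma$-bound $\mathcal{R}^\gamma(\mathscr{T})$ is defined in the same way with Gaussians. For an operator $A\in\mathcal{L}(X,Y)$, $C_2(A)$ (Rademacher cotype 2 constant) is the least $C$ such that $(\sum_{n=1}^k\|Ax_n\|^2)^{1/2}\le C\|\sum_{n=1}^k r_nx_n\|_{L^2(\Omega;X)}$ for all $k$ and $x_1,\dots,x_k\in X$; $C_2^\gamma(A)$ is defined identically with $(\gamma_n)$ in place of $(r_n)$. *)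

(* Defs.v *)
From Stdlib Require Import Reals.
Open Scope R_scope.

Fixpoint sumR (k : nat) (f : nat -> R) : R :=
  match k with O => 0 | S k' => sumR k' f + f k' end.

Fixpoint supnorm (M : nat) (x : nat -> R) : R :=
  match M with O => 0 | S m => Rmax (supnorm m x) (Rabs (x m)) end.

Definition vcons (t : R) (e : nat -> R) : nat -> R :=
  fun i => match i with O => t | S i' => e i' end.

(* Expectation over k independent Rademacher variables r_0..r_{k-1}:
   average over all 2^k sign choices. *)
Fixpoint Erad (k : nat) (F : (nat -> R) -> R) : R :=
  match k with
  | O => F (fun _ => 0)
  | S k' => (Erad k' (fun e => F (vcons 1 e)) + Erad k' (fun e => F (vcons (-1) e))) / 2
  end.

Definition is_exp_rad (k : nat) (F : (nat -> R) -> R) (v : R) : Prop := v = Erad k F.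

(* Improper Riemann integral over R (symmetric truncation; used for
   nonnegative continuous integrands). *)
Definition improper_int (G : R -> R) (v : R) : Prop :=
  forall eps, 0 < eps -> exists A, forall a, A <= a ->
    exists pr : Riemann_integrable G (- a) a, Rabs (RiemannInt pr - v) < eps.

Definition gdens (t : R) : R := exp (- (t * t) / 2) / sqrt (2 * PI).

(* Expectation over k independent standard Gaussians g_0..g_{k-1},
   as an iterated integral against the Gaussian density. *)
Fixpoint is_exp_gauss (k : nat) (F : (nat -> R) -> R) (v : R) : Prop :=
  match k with
  | O => v = F (fun _ => 0)
  | S k' => exists G : R -> R,
      (forall t, is_exp_gauss k' (fun e => F (vcons t e)) (G t)) /\
      improper_int (fun t => gdens t * G t) v
  end.

(* A linear functional on ell^infty_M (vectors are nat -> R, only the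
   coordinates 0..M-1 are meaningful). *)
Definition lin_functional (M : nat) (T : (nat -> R) -> R) : Prop :=
  (forall x y, T (fun i => x i + y i) = T x + T y) /\
  (forall a x, T (fun i => a * x i) = a * T x) /\
  (forall x y, (forall i, (i < M)%nat -> x i = y i) -> T x = T y).

Definition rsum (k : nat) (r : nat -> R) (x : nat -> nat -> R) : nat -> R :=
  fun i => sumR k (fun j => r j * x j i).

(* C is an admissible R-bound (E = Rademacher) or gamma-bound (E = Gaussian)
   constant for the family {T_n : n < N} of functionals ell^infty_M -> R. *)
Definition Rbound_const (E : nat -> ((nat -> R) -> R) -> R -> Prop)
    (M N : nat) (T : nat -> (nat -> R) -> R) (C : R) : Prop :=
  forall (k : nat) (idx : nat -> nat) (x : nat -> nat -> R),
    (forall j, (j < k)%nat -> (idx j < N)%nat) ->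
    forall a b,
      E k (fun r => Rsqr (sumR k (fun j => r j * T (idx j) (x j)))) a ->
      E k (fun r => Rsqr (supnorm M (rsum k r x))) b ->
      sqrt a <= C * sqrt b.

Definition opA (T : nat -> (nat -> R) -> R) (x : nat -> R) : nat -> R :=
  fun n => T n x.

Definition cotype2_const (E : nat -> ((nat -> R) -> R) -> R -> Prop)
    (M N : nat) (A : (nat -> R) -> (nat -> R)) (C : R) : Prop :=
  forall (k : nat) (x : nat -> nat -> R) b,
    E k (fun r => Rsqr (supnorm M (rsum k r x))) b ->
    sqrt (sumR k (fun j => Rsqr (supnorm N (A (x j))))) <= C * sqrt b.

Definition is_least_const (P : R -> Prop) (c : R) : Prop :=
  P c /\ forall C, P C -> c <= C.

(* Main.v *)
Require Import Defs.
From Stdlib Require Import Reals Lra Lia FunctionalExtensionality.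
From Coquelicot Require Import Coquelicot.
Open Scope R_scope.


Lemma RInt_dpl (f : R -> R) a x : (forall y, continuity_pt f y) ->
  derivable_pt_lim (fun y => RInt f a y) x (f x).
Proof.
intros Hc. apply is_derive_Reals.
apply (is_derive_RInt f (fun y => RInt f a y) a x).
- apply filter_forall. intros b. apply (RInt_correct (V:=R_CompleteNormedModule)).
  apply ex_RInt_continuous. intros z _. apply continuity_pt_filterlim. apply Hc.
- apply continuity_pt_filterlim. apply Hc.
Qed.


Lemma atan_int : RInt (fun x => / (1 + x * x)) 0 1 = PI / 4.
Proof.
rewrite <- atan_1. replace (atan 1) with (atan 1 - atan 0) by (rewrite atan_0; ring).
apply is_RInt_unique.
apply (is_RInt_derive atan (fun x => / (1 + x * x))).
- intros x _. apply is_derive_Reals. 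
  replace (/ (1 + x*x)) with (/ (1 + x^2)) by (f_equal; ring).
  apply derivable_pt_lim_atan.
- intros x _. apply continuity_pt_filterlim.
  apply continuity_pt_inv. apply continuity_pt_plus. apply continuity_pt_const. intros ? ?; reflexivity.
  apply continuity_pt_mult; apply derivable_continuous_pt; apply derivable_pt_id.
  apply Rgt_not_eq. apply Rlt_le_trans with 1. lra. pose proof (Rle_0_sqr x). unfold Rsqr in H. lra.
Qed.

Lemma atan_cont y : continuity_pt (fun x => / (1 + x * x)) y.
Proof.
  apply continuity_pt_inv. apply continuity_pt_plus. apply continuity_pt_const. intros ? ?; reflexivity.
  apply continuity_pt_mult; apply derivable_continuous_pt; apply derivable_pt_id.
  apply Rgt_not_eq. apply Rlt_le_trans with 1. lra. pose proof (Rle_0_sqr y). unfold Rsqr in H. lra.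
Qed.

Lemma gf_cont y : continuity_pt (fun t => exp (- (t * t))) y.
Proof.
apply derivable_continuous_pt. 
apply (derivable_pt_comp (fun t => - (t*t)) exp). 
apply derivable_pt_opp. apply derivable_pt_mult; apply derivable_pt_id.
apply derivable_pt_exp.
Qed.

Module MC.
From HB Require Import structures.
From mathcomp Require Import all_boot all_order all_algebra.
From mathcomp Require Import all_classical all_reals all_analysis.
From mathcomp Require Import Rstruct Rstruct_topology.
Import Order.TTheory GRing.Theory Num.Theory.
Import numFieldNormedType.Exports.
Local Open Scope classical_set_scope.
Local Open Scope ring_scope.

Lemma bridge_deriv (f : R^o -> R^o) (x l : R^o) :
  derivable_pt_lim f x l -> is_derive x 1 f l.
Proof.
move=> H.
suff Hc : (fun h : R^o => h^-1 *: ((f \o shift x) (h *: 1) - f x)) @ 0^' --> l.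
  apply: DeriveDef; first by apply/cvg_ex; exists l.
  by apply/cvg_lim.
apply/cvgrPdist_lt => e e0.
have e0' : Rlt 0 e by apply/RltP.
have [d Hd] := H e e0'.
rewrite /prop_near1 /nbhs /= /within /=.
apply/nbhs_ballP; exists (pos d).
  by apply/RltP; exact: cond_pos.
move=> h /= hb hn.
have hn' : h <> 0 by apply/eqP.
have := Hd h hn'.
have hd : (Rabs h < d)%coqR.
  by move: hb; rewrite -ball_normE /= sub0r normrN => /RltP.
move/(_ hd)/RltP.
rewrite distrC.
suff -> : (h^-1 *: (f (h%:A + x) - f x)) = ((f (x + h) - f x) / h)%coqR by [].
rewrite /GRing.scale /= mulr1 (addrC h) mulrC. done.
Qed.

Lemma RL (f : R -> R) a b : a < b -> (forall y, continuity_pt f y) ->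
  (\int[@lebesgue_measure R]_(x in `[a,b]) (f x)%:E = (RInt f a b)%:E)%E.
Proof.
move=> ab Hc.
have D y : is_derive (y : R^o) 1 (fun z : R^o => RInt f a z : R^o) (f y).
  exact: bridge_deriv (RInt_dpl f a y Hc).
have cF : continuous (fun z : R^o => RInt f a z : R^o).
  move=> y; apply: differentiable_continuous.
  by apply/derivable1_diffP; case: (D y).
rewrite (@continuous_FTC2 _ f (fun z => RInt f a z) a b ab).
- by rewrite RInt_point -EFinB subr0.
- apply: continuous_subspaceT => y; exact/continuity_pt_cvg.
- split.
  + by move=> y _; case: (D y).
  + exact/cvg_at_right_filter/cF.
  + exact/cvg_at_left_filter/cF.
- by move=> y _; rewrite derive1E; case: (D y).
Qed.

Lemma PI_eq : pi = PI :> R.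
Proof.
have H := @integral0_oneDsqr R 1 ler01.
rewrite atan1 in H.
have H2 := RL (fun x => (oneDsqr x)^-1) 0 1 ltr01 atan_cont.
move: H; rewrite /Rintegral H2 /=.
have -> : RInt (fun x => (oneDsqr x)^-1) 0 1 = (PI / 4)%coqR by exact: atan_int.
rewrite IZRposE INRE /= => E.
apply: (@mulIf _ (4^-1)); first by rewrite invr_eq0 pnatr_eq0.
by rewrite -E.
Qed.

Lemma gauss_eq x : 0 < x ->
  gauss_integral_proof.integral0_gauss x = RInt (fun t => exp (- (t*t))) 0 x.
Proof.
move=> x0; rewrite /gauss_integral_proof.integral0_gauss /Rintegral.
have -> : (@gauss_fun R) = (fun t => exp (- (t*t))).
  by apply/funext => t; rewrite /gauss_fun RexpE expr2.
by rewrite (RL _ 0 x x0 gf_cont).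
Qed.

Lemma gauss_lim eps : (0 < eps)%coqR -> exists M, forall x, (M < x)%coqR ->
  (Rabs ((RInt (fun t => exp (- (t*t))) 0 x)^2 - PI/4) < eps)%coqR.
Proof.
move=> /RltP e0.
have C := @gauss_integral_proof.cvg_integral0_gauss_sqr R.
move/cvgrPdist_lt: C => /(_ eps e0) [M [_ HM]].
exists (Rmax M 0) => x /RltP Mx.
have x0 : 0 < x by apply: le_lt_trans Mx; apply/RleP; apply: Rmax_r.
have Mx' : M < x by apply: le_lt_trans Mx; apply/RleP; apply: Rmax_l.
have := HM x Mx'.
rewrite gauss_eq // PI_eq distrC RpowE RabsE IZRposE INRE /=.
by move/RltP.
Qed.
End MC.


Lemma sumR_ext k f g : (forall j, (j < k)%nat -> f j = g j) -> sumR k f = sumR k g.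
Proof.
induction k; simpl; intros H; auto.
rewrite IHk by (intros; apply H; lia). rewrite H by lia. auto.
Qed.

Lemma sumR_le k f g : (forall j, (j < k)%nat -> f j <= g j) -> sumR k f <= sumR k g.
Proof.
induction k; simpl; intros H; [lra|].
pose proof (IHk (fun j Hj => H j ltac:(lia))). pose proof (H k ltac:(lia)). lra.
Qed.

Lemma sumR_shift k f : sumR (S k) f = f O + sumR k (fun j => f (S j)).
Proof.
induction k; simpl in *. ring. rewrite IHk. ring.
Qed.

Lemma supnorm_ge M y n : (n < M)%nat -> Rabs (y n) <= supnorm M y.
Proof.
induction M; intros H; [lia|]. simpl.
destruct (Nat.eq_dec n M). subst. apply Rmax_r.
eapply Rle_trans; [apply IHM; lia| apply Rmax_l].
Qed.

Lemma supnorm_ge0 M y : 0 <= supnorm M y.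
Proof. induction M; simpl. lra. eapply Rle_trans; [apply IHM| apply Rmax_l]. Qed.

Fixpoint amax (N : nat) (y : nat -> R) : nat :=
  match N with O => O | S m => if Rle_dec (supnorm m y) (Rabs (y m)) then m else amax m y end.

Lemma amax_spec N y : (1 <= N)%nat -> (amax N y < N)%nat /\ supnorm N y = Rabs (y (amax N y)).
Proof.
induction N; intros H; [lia|]. simpl.
destruct (Rle_dec (supnorm N y) (Rabs (y N))).
- split. lia. apply Rmax_right. auto.
- destruct N. simpl in n. pose proof (Rabs_pos (y O)). lra.
  destruct (IHN ltac:(lia)) as [H1 H2]. split. lia.
  rewrite <- H2. apply Rmax_left. lra.
Qed.

Definition QE (E : nat -> ((nat -> R) -> R) -> R -> Prop) : Prop :=
  forall k (c : nat -> R) v,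
    E k (fun r => Rsqr (sumR k (fun j => r j * c j))) v <-> v = sumR k (fun j => Rsqr (c j)).

Lemma const_equiv E M N T C : QE E -> (1 <= N)%nat ->
  Rbound_const E M N T C <-> cotype2_const E M N (opA T) C.
Proof.
intros HQ HN. split.
- intros HR k x b Hb.
  set (idx := fun j => amax N (opA T (x j))).
  assert (Hidx : forall j, (j < k)%nat -> (idx j < N)%nat).
  { intros j _. apply amax_spec. auto. }
  assert (Ha := proj2 (HQ k (fun j => T (idx j) (x j)) _) eq_refl).
  pose proof (HR k idx x Hidx _ _ Ha Hb) as H.
  replace (sumR k (fun j => Rsqr (supnorm N (opA T (x j)))))
    with (sumR k (fun j => Rsqr (T (idx j) (x j)))). exact H.
  apply sumR_ext. intros j _. destruct (amax_spec N (opA T (x j)) HN) as [_ H2].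
  rewrite H2. rewrite <- Rsqr_abs. reflexivity.
- intros HC k idx x Hidx a b Ha Hb.
  apply HQ in Ha. subst a.
  eapply Rle_trans; [|apply (HC k x b Hb)].
  apply sqrt_le_1_alt. apply sumR_le. intros j Hj.
  rewrite (Rsqr_abs (T (idx j) (x j))).
  apply Rsqr_incr_1. apply (supnorm_ge N (opA T (x j)) (idx j)). auto.
  apply Rabs_pos. apply supnorm_ge0.
Qed.

Lemma least_equiv E M N T : QE E -> (1 <= N)%nat ->
  forall c, is_least_const (Rbound_const E M N T) c <->
            is_least_const (cotype2_const E M N (opA T)) c.
Proof.
intros HQ HN c. unfold is_least_const.
split; intros [H1 H2]; split.
- apply const_equiv; auto.
- intros C HC. apply H2. apply const_equiv; auto.
- apply const_equiv; auto.
- intros C HC. apply H2. apply const_equiv; auto.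
Qed.

Lemma Erad_S k F : Erad (S k) F = (Erad k (fun e => F (vcons 1 e)) + Erad k (fun e => F (vcons (-1) e))) / 2.
Proof. reflexivity. Qed.

Lemma rad_quad k : forall (a : R) (c : nat -> R),
  Erad k (fun r => Rsqr (a + sumR k (fun j => r j * c j))) = Rsqr a + sumR k (fun j => Rsqr (c j)).
Proof.
induction k; intros a c.
- simpl. unfold Rsqr. ring.
- rewrite Erad_S.
  replace (fun e => Rsqr (a + sumR (S k) (fun j => vcons 1 e j * c j)))
    with (fun e => Rsqr ((a + c O) + sumR k (fun j => e j * c (S j)))).
  2:{ apply functional_extensionality. intros e. rewrite sumR_shift. simpl. f_equal. ring. }
  replace (fun e => Rsqr (a + sumR (S k) (fun j => vcons (-1) e j * c j)))
    with (fun e => Rsqr ((a - c O) + sumR k (fun j => e j * c (S j)))).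
  2:{ apply functional_extensionality. intros e. rewrite sumR_shift. simpl. f_equal. ring. }
  rewrite !IHk. rewrite sumR_shift. unfold Rsqr. field.
Qed.

Lemma QE_rad : QE is_exp_rad.
Proof.
intros k c v. unfold is_exp_rad.
replace (fun r => Rsqr (sumR k (fun j => r j * c j)))
  with (fun r => Rsqr (0 + sumR k (fun j => r j * c j))).
2:{ apply functional_extensionality; intros; rewrite Rplus_0_l; auto. }
rewrite rad_quad. rewrite Rsqr_0, Rplus_0_l. tauto.
Qed.


Definition gauss_lim := MC.gauss_lim.

Definition gg t := exp (- (t * t)).

Lemma gg_cont y : continuity_pt gg y.
Proof.
apply derivable_continuous_pt.
apply (derivable_pt_comp (fun t => - (t*t)) exp).
apply derivable_pt_opp. apply derivable_pt_mult; apply derivable_pt_id.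
apply derivable_pt_exp.
Qed.

Lemma ex_RInt_cont f a b : (forall y, continuity_pt f y) -> ex_RInt f a b.
Proof.
intros H. apply (ex_RInt_continuous (V:=R_CompleteNormedModule)).
intros z _. apply continuity_pt_filterlim. apply H.
Qed.

Lemma I_ge0 x : 0 <= x -> 0 <= RInt gg 0 x.
Proof.
intros Hx. apply RInt_ge_0; auto. apply ex_RInt_cont, gg_cont.
intros. unfold gg. left. apply exp_pos.
Qed.

Lemma PI_pos' : 0 < PI. Proof. apply PI_RGT_0. Qed.

Lemma L1 eps : 0 < eps -> exists M, forall x, M < x -> Rabs (RInt gg 0 x - sqrt PI / 2) < eps.
Proof.
intros He.
assert (Hs : 0 < sqrt PI) by (apply sqrt_lt_R0, PI_pos').
destruct (gauss_lim (eps * (sqrt PI / 2))) as [M HM].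
{ apply Rmult_lt_0_compat; lra. }
exists (Rmax M 0). intros x Hx.
assert (HMx : M < x) by (eapply Rle_lt_trans; [apply Rmax_l|exact Hx]).
assert (H0x : 0 < x) by (eapply Rle_lt_trans; [apply Rmax_r|exact Hx]).
specialize (HM x HMx). fold gg in HM.
pose proof (I_ge0 x (Rlt_le _ _ H0x)) as HI.
set (I := RInt gg 0 x) in *.
assert (E : I ^ 2 - PI / 4 = (I - sqrt PI / 2) * (I + sqrt PI / 2)).
{ replace (PI / 4) with ((sqrt PI * sqrt PI) / 4). field.
  rewrite sqrt_sqrt. field. left; apply PI_pos'. }
rewrite E, Rabs_mult in HM.
rewrite (Rabs_right (I + sqrt PI / 2)) in HM by lra.
assert (Rabs (I - sqrt PI / 2) * (sqrt PI / 2) <= Rabs (I - sqrt PI / 2) * (I + sqrt PI / 2)).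
{ apply Rmult_le_compat_l. apply Rabs_pos. lra. }
assert (Rabs (I - sqrt PI / 2) * (sqrt PI / 2) < eps * (sqrt PI / 2)) by lra.
apply Rmult_lt_reg_r in H0; lra.
Qed.

Lemma L_sym b : RInt gg (-b) b = 2 * RInt gg 0 b.
Proof.
assert (Ex : forall u v, ex_RInt gg u v) by (intros; apply ex_RInt_cont, gg_cont).
rewrite <- (RInt_Chasles gg (-b) 0 b) by auto.
assert (H := RInt_comp_lin gg (-1) 0 b 0 (Ex _ _)).
replace (-1 * b + 0) with (-b) in H by ring.
replace (-1 * 0 + 0) with 0 in H by ring.
rewrite <- H.
rewrite (RInt_ext _ (fun y => opp (gg y))).
2:{ intros x _. unfold gg. simpl. unfold scal; simpl. unfold mult, opp; simpl.
    replace (- ((-1 * x + 0) * (-1 * x + 0))) with (- (x * x)) by ring. ring. }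
rewrite (RInt_opp (V:=R_CompleteNormedModule) gg) by auto. rewrite (opp_RInt_swap (V:=R_CompleteNormedModule)) by auto.
simpl. unfold plus; simpl. ring.
Qed.

Definition hh t := exp (- (t * t) / 2).

Lemma hh_cont y : continuity_pt hh y.
Proof.
apply derivable_continuous_pt.
apply (derivable_pt_comp (fun t => - (t*t) / 2) exp).
apply derivable_pt_div. apply derivable_pt_opp. apply derivable_pt_mult; apply derivable_pt_id.
apply derivable_pt_const. intros; lra.
apply derivable_pt_exp.
Qed.

Lemma gdens_eq t : gdens t = hh t / sqrt (2 * PI).
Proof. reflexivity. Qed.

Lemma gdens_cont y : continuity_pt gdens y.
Proof.
apply continuity_pt_div. apply hh_cont. apply continuity_pt_const. intros ? ?; auto.
apply Rgt_not_eq. apply sqrt_lt_R0. pose proof PI_pos'. lra.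
Qed.

Lemma m0_eq a : RInt gdens (-a) a = 2 / sqrt PI * RInt gg 0 (a / sqrt 2).
Proof.
assert (Hs2 : 0 < sqrt 2) by (apply sqrt_lt_R0; lra).
assert (HsP : 0 < sqrt PI) by (apply sqrt_lt_R0, PI_pos').
assert (Ex : forall u v, ex_RInt hh u v) by (intros; apply ex_RInt_cont, hh_cont).
rewrite (RInt_ext _ (fun t => scal (/ sqrt (2 * PI)) (hh t))).
2:{ intros; unfold scal; simpl; unfold mult; simpl. rewrite gdens_eq. unfold Rdiv. ring. }
rewrite (RInt_scal (V:=R_CompleteNormedModule)) by auto.
assert (H := RInt_comp_lin hh (sqrt 2) 0 (- (a / sqrt 2)) (a / sqrt 2) (Ex _ _)).
replace (sqrt 2 * - (a / sqrt 2) + 0) with (-a) in H by (field; lra).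
replace (sqrt 2 * (a / sqrt 2) + 0) with a in H by (field; lra).
rewrite <- H.
rewrite (RInt_ext _ (fun y => scal (sqrt 2) (gg y))).
2:{ intros x _. f_equal. unfold hh, gg. f_equal.
    replace ((sqrt 2 * x + 0) * (sqrt 2 * x + 0)) with ((sqrt 2 * sqrt 2) * (x * x)) by ring.
    rewrite sqrt_sqrt by lra. field. }
rewrite (RInt_scal (V:=R_CompleteNormedModule)) by (apply ex_RInt_cont, gg_cont).
rewrite L_sym. rewrite sqrt_mult by (try lra; left; apply PI_pos').
unfold scal; simpl; unfold mult; simpl. field. split; lra.
Qed.

Lemma L2 eps : 0 < eps -> exists M, forall a, M < a -> Rabs (RInt gdens (-a) a - 1) < eps.
Proof.
intros He.
assert (Hs2 : 0 < sqrt 2) by (apply sqrt_lt_R0; lra).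
assert (HsP : 0 < sqrt PI) by (apply sqrt_lt_R0, PI_pos').
destruct (L1 (eps * sqrt PI / 2)) as [M HM].
{ apply Rmult_lt_0_compat. apply Rmult_lt_0_compat; lra. lra. }
exists (M * sqrt 2). intros a Ha.
rewrite m0_eq.
assert (HMa : M < a / sqrt 2).
{ apply Rmult_lt_reg_r with (sqrt 2); auto. unfold Rdiv. rewrite Rmult_assoc, Rinv_l, Rmult_1_r; lra. }
specialize (HM _ HMa).
replace (2 / sqrt PI * RInt gg 0 (a / sqrt 2) - 1) with (2 / sqrt PI * (RInt gg 0 (a / sqrt 2) - sqrt PI / 2))
  by (field; lra).
rewrite Rabs_mult, Rabs_right.
2:{ left. apply Rdiv_lt_0_compat; lra. }
apply Rmult_lt_reg_l with (sqrt PI / 2). lra.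
replace (sqrt PI / 2 * (2 / sqrt PI * Rabs (RInt gg 0 (a / sqrt 2) - sqrt PI / 2)))
  with (Rabs (RInt gg 0 (a / sqrt 2) - sqrt PI / 2)) by (field; lra).
lra.
Qed.

Lemma s2PI_pos : 0 < sqrt (2 * PI).
Proof. apply sqrt_lt_R0. pose proof PI_pos'. lra. Qed.

Lemma gdens_even a : gdens (-a) = gdens a.
Proof. unfold gdens. f_equal. f_equal. f_equal. ring. Qed.

Lemma gdens_der t : is_derive gdens t (- t * gdens t).
Proof.
unfold gdens. pose proof s2PI_pos. auto_derive. exact I.
unfold Rdiv. field. apply Rgt_not_eq; auto.
Qed.

Lemma quad_RInt al c S a :
  RInt (fun t => gdens t * (Rsqr (al + t * c) + S)) (-a) a =
  (Rsqr al + (Rsqr c + S)) * RInt gdens (-a) a - 2 * Rsqr c * a * gdens a.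
Proof.
set (p := fun t => -2*al*c - c*c*t).
set (Q := fun t => p t * gdens t).
set (Q' := fun t => (-(c*c) + p t * (-t)) * gdens t).
assert (HQ : forall t, is_derive Q t (Q' t)).
{ intros t.
  assert (Hp : is_derive p t (-(c*c))) by (unfold p; auto_derive; [exact I| ring]).
  pose proof (is_derive_mult p gdens t _ _ Hp (gdens_der t) Rmult_comm) as H.
  simpl in H. unfold plus, mult in H; simpl in H.
  replace (Q' t) with (-(c*c) * gdens t + p t * (- t * gdens t)) by (unfold Q'; ring).
  exact H. }
assert (HQc : forall t, continuous Q' t).
{ intros t. apply continuity_pt_filterlim. unfold Q'.
  apply continuity_pt_mult; [|apply gdens_cont].
  unfold p. apply derivable_continuous_pt. reg. }
assert (H1 : is_RInt Q' (-a) a (minus (Q a) (Q (-a)))).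
{ apply (is_RInt_derive (V:=R_CompleteNormedModule)); intros; auto. }
assert (H2 : is_RInt gdens (-a) a (RInt gdens (-a) a)).
{ apply (RInt_correct (V:=R_CompleteNormedModule)). apply ex_RInt_cont, gdens_cont. }
pose proof (is_RInt_scal _ _ _ (Rsqr al + (Rsqr c + S)) _ H2) as H3.
pose proof (is_RInt_plus _ _ _ _ _ _ H3 H1) as H4.
apply is_RInt_unique.
replace ((Rsqr al + (Rsqr c + S)) * RInt gdens (-a) a - 2 * Rsqr c * a * gdens a)
  with (plus (scal (Rsqr al + (Rsqr c + S)) (RInt gdens (-a) a)) (minus (Q a) (Q (-a)))).
- apply (is_RInt_ext _ _ _ _ _ (fun x _ => eq_refl _)) in H4.
  revert H4. apply is_RInt_ext. intros x _.
  unfold Q', p, plus, scal; simpl. unfold mult, plus; simpl. unfold Rsqr. ring.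
- unfold Q, p, minus, plus, opp, scal; simpl. unfold mult, plus, opp; simpl.
  rewrite gdens_even. unfold Rsqr. ring.
Qed.

Lemma improper_unique G v1 v2 : improper_int G v1 -> improper_int G v2 -> v1 = v2.
Proof.
intros H1 H2.
apply Rminus_diag_uniq. apply Rabs_eq_0.
destruct (Rle_lt_or_eq_dec 0 (Rabs (v1 - v2)) (Rabs_pos _)) as [Hp|Hp]; [|auto].
exfalso.
set (e := Rabs (v1 - v2) / 2).
assert (He : 0 < e) by (unfold e; lra).
destruct (H1 e He) as [A1 HA1]. destruct (H2 e He) as [A2 HA2].
destruct (HA1 (Rmax A1 A2) (Rmax_l _ _)) as [pr1 Hp1].
destruct (HA2 (Rmax A1 A2) (Rmax_r _ _)) as [pr2 Hp2].
rewrite (RiemannInt_P5 pr1 pr2) in Hp1.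
assert (Rabs (v1 - v2) <= Rabs (RiemannInt pr2 - v2) + Rabs (RiemannInt pr2 - v1)).
{ replace (v1 - v2) with ((RiemannInt pr2 - v2) - (RiemannInt pr2 - v1)) by ring.
  eapply Rle_trans. apply Rabs_triang. rewrite Rabs_Ropp. lra. }
unfold e in *. lra.
Qed.

Lemma agd_bound a : 0 < a -> a * gdens a <= 2 / a.
Proof.
intros Ha.
assert (Hs : 1 <= sqrt (2 * PI)).
{ rewrite <- sqrt_1. apply sqrt_le_1_alt. pose proof PI_pos'. pose proof PI2_3_2. lra. }
assert (He : 1 + a * a / 2 < exp (a * a / 2)).
{ apply exp_ineq1. apply Rgt_not_eq. apply Rdiv_lt_0_compat; [nra|lra]. }
unfold gdens.
replace (exp (- (a * a) / 2)) with (/ exp (a * a / 2)).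
2:{ rewrite <- exp_Ropp. f_equal. field. }
assert (0 < exp (a * a / 2)) by apply exp_pos.
assert (0 < sqrt (2 * PI)) by lra.
apply Rle_trans with (a * / exp (a * a / 2)).
- unfold Rdiv. rewrite <- Rmult_assoc. rewrite <- (Rmult_1_r (a * / exp (a * a / 2))) at 2.
  apply Rmult_le_compat_l. apply Rmult_le_pos; [lra| left; apply Rinv_0_lt_compat; lra].
  rewrite <- Rinv_1. apply Rinv_le_contravar; lra.
- apply Rmult_le_reg_r with (exp (a * a / 2) * a). nra.
  replace (a * / exp (a * a / 2) * (exp (a * a / 2) * a)) with (a * a) by (field; lra).
  replace (2 / a * (exp (a * a / 2) * a)) with (2 * exp (a * a / 2)) by (field; lra).
  lra.
Qed.

Lemma gdens_pos t : 0 < gdens t.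
Proof. unfold gdens. apply Rdiv_lt_0_compat. apply exp_pos. apply s2PI_pos. Qed.

Lemma quad_improper al c S v :
  improper_int (fun t => gdens t * (Rsqr (al + t * c) + S)) v <-> v = Rsqr al + (Rsqr c + S).
Proof.
set (K := Rsqr al + (Rsqr c + S)).
assert (Ex : improper_int (fun t => gdens t * (Rsqr (al + t * c) + S)) K).
{ intros eps He.
  destruct (L2 (eps / (2 * (Rabs K + 1)))) as [M HM].
  { apply Rdiv_lt_0_compat; auto. pose proof (Rabs_pos K). lra. }
  exists (Rmax (M + 1) (Rmax 1 (8 * (Rsqr c + 1) / eps))).
  intros a Ha.
  assert (HaM : M < a) by (pose proof (Rmax_l (M+1) (Rmax 1 (8 * (Rsqr c + 1) / eps))); lra).
  assert (Ha1 : 1 <= a) by (pose proof (Rmax_r (M+1) (Rmax 1 (8 * (Rsqr c + 1) / eps)));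
     pose proof (Rmax_l 1 (8 * (Rsqr c + 1) / eps)); lra).
  assert (Ha2 : 8 * (Rsqr c + 1) / eps <= a) by (pose proof (Rmax_r (M+1) (Rmax 1 (8 * (Rsqr c + 1) / eps)));
     pose proof (Rmax_r 1 (8 * (Rsqr c + 1) / eps)); lra).
  assert (Hcont : forall x, continuity_pt (fun t => gdens t * (Rsqr (al + t * c) + S)) x).
  { intros x. apply continuity_pt_mult. apply gdens_cont.
    apply derivable_continuous_pt. unfold Rsqr. reg. }
  exists (@continuity_implies_RiemannInt _ (-a) a ltac:(lra) (fun x _ => Hcont x)).
  rewrite <- RInt_Reals. rewrite quad_RInt. fold K.
  specialize (HM a HaM).
  pose proof (agd_bound a ltac:(lra)) as Hb.
  pose proof (gdens_pos a).
  assert (Hc0 := Rle_0_sqr c).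
  assert (H1 : Rabs (K * (RInt gdens (- a) a - 1)) <= Rabs K * (eps / (2 * (Rabs K + 1)))).
  { rewrite Rabs_mult. apply Rmult_le_compat_l. apply Rabs_pos. lra. }
  assert (H2 : Rabs K * (eps / (2 * (Rabs K + 1))) < eps / 2).
  { pose proof (Rabs_pos K).
    apply Rmult_lt_reg_r with (2 * (Rabs K + 1)). lra.
    replace (Rabs K * (eps / (2 * (Rabs K + 1))) * (2 * (Rabs K + 1))) with (Rabs K * eps) by (field; lra).
    nra. }
  assert (H3 : 2 * Rsqr c * a * gdens a <= 4 * Rsqr c / a).
  { replace (2 * Rsqr c * a * gdens a) with (2 * Rsqr c * (a * gdens a)) by ring.
    replace (4 * Rsqr c / a) with (2 * Rsqr c * (2 / a)) by (field; lra).
    apply Rmult_le_compat_l; lra. }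
  assert (H4 : 4 * Rsqr c / a < eps / 2).
  { apply Rmult_lt_reg_r with (a / eps * 2). apply Rmult_lt_0_compat. apply Rdiv_lt_0_compat; lra. lra.
    replace (4 * Rsqr c / a * (a / eps * 2)) with (8 * Rsqr c / eps) by (field; lra).
    replace (eps / 2 * (a / eps * 2)) with a by (field; lra).
    apply Rlt_le_trans with (8 * (Rsqr c + 1) / eps); [|auto].
    apply Rmult_lt_compat_r. apply Rinv_0_lt_compat; lra. lra. }
  replace (K * RInt gdens (- a) a - 2 * Rsqr c * a * gdens a - K)
    with (K * (RInt gdens (- a) a - 1) - 2 * Rsqr c * a * gdens a) by ring.
  eapply Rle_lt_trans. apply Rabs_triang. rewrite Rabs_Ropp.
  rewrite (Rabs_right (2 * Rsqr c * a * gdens a)).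
  2:{ apply Rle_ge. apply Rmult_le_pos; [|lra]. apply Rmult_le_pos; lra. }
  lra. }
split.
- intros H. exact (improper_unique _ _ _ H Ex).
- intros ->. exact Ex.
Qed.

Lemma gauss_S k F v : is_exp_gauss (S k) F v = exists G : R -> R,
  (forall t, is_exp_gauss k (fun e => F (vcons t e)) (G t)) /\
  improper_int (fun t => gdens t * G t) v.
Proof. reflexivity. Qed.

Lemma gauss_quad k : forall al (c : nat -> R) v,
  is_exp_gauss k (fun r => Rsqr (al + sumR k (fun j => r j * c j))) v <->
  v = Rsqr al + sumR k (fun j => Rsqr (c j)).
Proof.
induction k; intros al c v.
- simpl. rewrite !Rplus_0_r. tauto.
- rewrite gauss_S.
  set (S' := sumR k (fun j => Rsqr (c (S j)))).
  assert (Hf : forall t, (fun e => Rsqr (al + sumR (S k) (fun j => vcons t e j * c j))) =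
     (fun e => Rsqr ((al + t * c O) + sumR k (fun j => e j * c (S j))))).
  { intros t. apply functional_extensionality. intros e. rewrite sumR_shift. simpl. f_equal. ring. }
  rewrite sumR_shift. fold S'.
  split.
  + intros [G [HG Hi]].
    assert (HGe : (fun t => gdens t * G t) = (fun t => gdens t * (Rsqr (al + t * c O) + S'))).
    { apply functional_extensionality. intros t. f_equal.
      specialize (HG t). rewrite Hf in HG. apply IHk in HG. exact HG. }
    rewrite HGe in Hi. apply quad_improper in Hi. exact Hi.
  + intros Hv. exists (fun t => Rsqr (al + t * c O) + S'). split.
    * intros t. rewrite Hf. apply IHk. reflexivity.
    * apply quad_improper. exact Hv.
Qed.

Lemma QE_gauss : QE is_exp_gauss.
Proof.
intros k c v.
replace (fun r => Rsqr (sumR k (fun j => r j * c j)))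
  with (fun r => Rsqr (0 + sumR k (fun j => r j * c j))).
2:{ apply functional_extensionality; intros; rewrite Rplus_0_l; auto. }
rewrite gauss_quad. rewrite Rsqr_0, Rplus_0_l. tauto.
Qed.

Theorem mainTheorem3 (M N : nat) (T : nat -> (nat -> R) -> R) :
  (1 <= M)%nat -> (1 <= N)%nat ->
  (forall n, (n < N)%nat -> lin_functional M (T n)) ->
  (forall c, is_least_const (Rbound_const is_exp_rad M N T) c <->
             is_least_const (cotype2_const is_exp_rad M N (opA T)) c) /\
  (forall c, is_least_const (Rbound_const is_exp_gauss M N T) c <->
             is_least_const (cotype2_const is_exp_gauss M N (opA T)) c).
Proof.
intros _ HN _. split.
- apply least_equiv; auto. apply QE_rad.
- apply least_equiv; auto. apply QE_gauss.
Qed.
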